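(* Let $W,V$ be subspaces of $\mathbb{C}^n$ with $\mathbb{C}^n=W\oplus V^\perp$, let $\{\mathbf{w}_i\}_{i=1}^N$ be a frame for $W$ with frame operator $\mathbf{S}=\sum_{i=1}^N\mathbf{w}_i\mathbf{w}_i^*$, and let $\{\mathbf{v}_i\}_{i=1}^N$ be an oblique dual frame of $\{\mathbf{w}_i\}_{i=1}^N$ on $V$. Then $$\sum_{i=1}^N\sum_{j=1}^N|\langle\mathbf{w}_i,\mathbf{v}_j\rangle|^2\ge d_W,$$ where $d_W=\dim W$, and equality holds if and only if $\mathbf{v}_j=\boldsymbol{\pi}_{VW^\perp}\mathbf{S}^\dagger\mathbf{w}_j$ for every $j=1,\dots,N$.
   Context: The inner product on $\mathbb{C}^n$ is $\langle\mathbf{x},\mathbf{y}\rangle=\mathbf{y}^*\mathbf{x}$. $\mathbf{S}^\dagger$ is the Moore–Penrose inverse. When $\mathbb{C}^n=W\oplus V^\perp$ (equivalently $\mathbb{C}^n=V\oplus W^\perp$), $\boldsymbol{\pi}_{WV^\perp}$ is the oblique projection onto $W$ along $V^\perp$ and $\boldsymbol{\pi}_{VW^\perp}$ is the oblique projection onto $V$ along $W^\perp$. A finite family $\{\mathbf{w}_i\}_{i=1}^N\subset W$ is a frame for $W$ if it spans $W$. A frame $\{\mathbf{v}_i\}_{i=1}^N\subset V$ for $V$ is an oblique dual frame of $\{\mathbf{w}_i\}$ on $V$ if $\boldsymbol{\pi}_{WV^\perp}\mathbf{f}=\sum_{i=1}^N\langle\mathbf{f},\mathbf{v}_i\rangle\mathbf{w}_i$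 for all $\mathbf{f}\in\mathbb{C}^n$. *)

(* Defs.v *)
From mathcomp Require Import all_boot all_order all_algebra.
Set Implicit Arguments. Unset Strict Implicit. Unset Printing Implicit Defensive.
Import Order.TTheory GRing.Theory Num.Theory.
Local Open Scope ring_scope.

(* Vectors of C^n are column vectors 'cV[C]_n; C is any numeric algebraically
   closed field with conjugation (e.g. the complex numbers). *)

Definition hadj (C : numClosedFieldType) m p (A : 'M[C]_(m, p)) : 'M[C]_(p, m) :=
  (map_mx Num.conj A)^T.

Definition cdot (C : numClosedFieldType) n (x y : 'cV[C]_n) : C :=
  (hadj y *m x) 0 0.

(* Subspaces of C^n are represented (mxalgebra style) by the row space of a
   square matrix U : 'M_n; the column vector x lies in U iff (x^T <= U)%MS. *)
Definition inS (C : numClosedFieldType) n (x : 'cV[C]_n) (U : 'M[C]_n) : bool :=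
  (x^T <= U)%MS.

(* orthogonal complement U^perp : row vectors r with r *m (conj U)^T = 0,
   i.e. column x = r^T with <x, u> = 0 for every u in U *)
Definition perp (C : numClosedFieldType) n (U : 'M[C]_n) : 'M[C]_n :=
  kermx (hadj U).

Definition direct_compl (C : numClosedFieldType) n (W V : 'M[C]_n) : Prop :=
  mxdirect (W + perp V) /\ row_full (W + perp V).

(* oblique projection pi_{W V^perp} onto W along V^perp, acting on column
   vectors (transpose of mathcomp's row-vector projection proj_mx) *)
Definition oproj (C : numClosedFieldType) n (W V : 'M[C]_n) : 'M[C]_n :=
  (proj_mx W (perp V))^T.

Definition fam_mx (C : numClosedFieldType) n N (w : 'I_N -> 'cV[C]_n) : 'M[C]_(N, n) :=
  \matrix_(i < N, k < n) w i k 0.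

Definition frame_for (C : numClosedFieldType) n N (w : 'I_N -> 'cV[C]_n)
  (U : 'M[C]_n) : Prop := (fam_mx w == U)%MS.

Definition frame_op (C : numClosedFieldType) n N (w : 'I_N -> 'cV[C]_n) : 'M[C]_n :=
  \sum_(i < N) (w i *m hadj (w i)).

Definition oblique_dual (C : numClosedFieldType) n N (W V : 'M[C]_n)
  (w v : 'I_N -> 'cV[C]_n) : Prop :=
  frame_for v V /\
  forall f : 'cV[C]_n, oproj W V *m f = \sum_(i < N) cdot f (v i) *: w i.

Definition is_MP_inverse (C : numClosedFieldType) n (A X : 'M[C]_n) : Prop :=
  [/\ A *m X *m A = A, X *m A *m X = X,
      hadj (A *m X) = A *m X & hadj (X *m A) = X *m A].

(* Main.v *)
Require Import Defs.
From mathcomp Require Import all_boot all_order all_algebra.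
From mathcomp Require Import zify ring.
Import Order.TTheory GRing.Theory Num.Theory.
Local Open Scope ring_scope.

Set Implicit Arguments.
Unset Strict Implicit.

Lemma hadjE (C : numClosedFieldType) m p (A : 'M[C]_(m, p)) i j :
  hadj A i j = (A j i)^*.
Proof. by rewrite /hadj !mxE. Qed.

Lemma hadjK (C : numClosedFieldType) m p (A : 'M[C]_(m, p)) : hadj (hadj A) = A.
Proof. by apply/matrixP => i j; rewrite !hadjE conjCK. Qed.

Lemma hadjM (C : numClosedFieldType) m p q (A : 'M[C]_(m, p)) (B : 'M[C]_(p, q)) :
  hadj (A *m B) = hadj B *m hadj A.
Proof.
apply/matrixP => i j; rewrite hadjE !mxE rmorph_sum; apply: eq_bigr => k _.
by rewrite !hadjE rmorphM mulrC.
Qed.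

Lemma hadjD (C : numClosedFieldType) m p (A B : 'M[C]_(m, p)) :
  hadj (A + B) = hadj A + hadj B.
Proof. by apply/matrixP => i j; rewrite !mxE rmorphD. Qed.

Lemma hadjN (C : numClosedFieldType) m p (A : 'M[C]_(m, p)) :
  hadj (- A) = - hadj A.
Proof. by apply/matrixP => i j; rewrite !mxE rmorphN. Qed.

Lemma hadjB (C : numClosedFieldType) m p (A B : 'M[C]_(m, p)) :
  hadj (A - B) = hadj A - hadj B.
Proof. by rewrite hadjD hadjN. Qed.

Lemma hadj0 (C : numClosedFieldType) m p : hadj (0 : 'M[C]_(m, p)) = 0.
Proof. by apply/matrixP => i j; rewrite !mxE conjC0. Qed.

Lemma hadj1 (C : numClosedFieldType) m : hadj (1%:M : 'M[C]_m) = 1%:M.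
Proof.
apply/matrixP => i j; rewrite !mxE [j == i]eq_sym; exact: (conjC_nat _ (i == j)).
Qed.

Lemma hadj_tr (C : numClosedFieldType) m p (A : 'M[C]_(m, p)) :
  hadj (A^T) = map_mx Num.conj A.
Proof. by apply/matrixP => i j; rewrite !mxE. Qed.

Lemma hadj_eq0 (C : numClosedFieldType) m p (A : 'M[C]_(m, p)) :
  hadj A = 0 -> A = 0.
Proof. by move=> H; rewrite -[A]hadjK H hadj0. Qed.

Lemma mul_hadj_eq0 (C : numClosedFieldType) m p (M : 'M[C]_(m, p)) :
  M *m hadj M = 0 -> M = 0.
Proof.
move=> H; apply/matrixP => i k; rewrite [RHS]mxE.
have := congr1 (fun X : 'M[C]_m => X i i) H; rewrite !mxE => /psumr_eq0P Hs.
have /eqP : M i k * (M i k)^* = 0.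
  have := Hs (fun j _ => ltac:(by rewrite hadjE; exact: mul_conjC_ge0)) k isT.
  by rewrite hadjE.
by rewrite mul_conjC_eq0 => /eqP.
Qed.

Lemma mxtrace_pid (F : fieldType) n r : (r <= n)%N -> \tr (pid_mx r : 'M[F]_n) = r%:R.
Proof.
move=> le; rewrite /mxtrace.
transitivity (\sum_(i < n | (i < r)%N) (1 : F)).
  rewrite [RHS]big_mkcond /=; apply: eq_bigr => i _; rewrite mxE eqxx /=.
  by case: (i < r)%N.
by rewrite -(big_ord_widen n (fun _ => (1:F)) le) sumr_const card_ord.
Qed.

Lemma trace_idem (F : fieldType) n (E : 'M[F]_n) : E *m E = E -> \tr E = (\rank E)%:R.
Proof.
move=> EE.
set L := col_ebase E; set U := row_ebase E; set r := \rank E.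
have Ed : E = L *m pid_mx r *m U by rewrite mulmx_ebase.
have rn : (r <= n)%N by exact: rank_leq_row.
have key : pid_mx r *m (U *m L) *m pid_mx r = pid_mx r :> 'M_n.
  have h : L *m (pid_mx r *m (U *m L) *m pid_mx r) *m U = L *m pid_mx r *m U.
    transitivity (E *m E); first by rewrite Ed !mulmxA.
    by rewrite EE {1}Ed.
  have := congr1 (fun X => invmx L *m (X *m invmx U)) h.
  by rewrite !mulmxK ?row_ebase_unit // -!mulmxA !mulKmx ?col_ebase_unit.
transitivity (\tr (pid_mx r *m (U *m L))).
  by rewrite {1}Ed [LHS]mxtrace_mulC (mxtrace_mulC (pid_mx r)) !mulmxA.
rewrite -{1}(pid_mx_id _ _ _ rn) -mulmxA mxtrace_mulC.
transitivity (\tr (pid_mx r : 'M[F]_n)); first by congr (\tr _); exact: key.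
exact: mxtrace_pid.
Qed.

Lemma MP_hadj (C : numClosedFieldType) n (A X : 'M[C]_n) :
  is_MP_inverse A X -> is_MP_inverse (hadj A) (hadj X).
Proof.
case=> h1 h2 h3 h4; split.
- by rewrite -!hadjM mulmxA h1.
- by rewrite -!hadjM mulmxA h2.
- by rewrite -hadjM h4.
- by rewrite -hadjM h3.
Qed.

Lemma MP_unique (C : numClosedFieldType) n (A X Y : 'M[C]_n) :
  is_MP_inverse A X -> is_MP_inverse A Y -> X = Y.
Proof.
case=> x1 x2 x3 x4 [y1 y2 y3 y4].
have hA1 : hadj A = hadj A *m (A *m Y).
  by rewrite -[in LHS]y1 hadjM y3.
have hA2 : hadj A = X *m A *m hadj A.
  by rewrite -[in LHS]x1 -[in LHS]mulmxA hadjM x4.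
have eX : X = X *m A *m Y.
  transitivity (X *m hadj (A *m X)); first by rewrite x3 mulmxA x2.
  transitivity (X *m (hadj X *m (hadj A *m (A *m Y)))).
    by rewrite -hA1 hadjM.
  transitivity (X *m (hadj (A *m X) *m (A *m Y))).
    by rewrite [hadj (A *m X)]hadjM !mulmxA.
  by rewrite x3 !mulmxA x2.
have eY : Y = X *m A *m Y.
  transitivity (hadj (Y *m A) *m Y); first by rewrite y4 y2.
  transitivity (((X *m A *m hadj A) *m hadj Y) *m Y).
    by rewrite -hA2 hadjM.
  transitivity (X *m A *m hadj (Y *m A) *m Y).
    by rewrite [hadj (Y *m A)]hadjM !mulmxA.
  by rewrite y4 -!mulmxA (mulmxA Y) y2.
by rewrite eX -eY.
Qed.

Lemma MP_herm (C : numClosedFieldType) n (A X : 'M[C]_n) :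
  hadj A = A -> is_MP_inverse A X -> hadj X = X.
Proof.
move=> hA hX; apply: (@MP_unique _ _ A) => //.
by rewrite -{1}hA; apply: MP_hadj.
Qed.


Lemma rank_hadj (C : numClosedFieldType) m p (A : 'M[C]_(m, p)) :
  \rank (hadj A) = \rank A.
Proof. by rewrite /hadj mxrank_tr; exact: (mxrank_map (Num.Def.conjC : {rmorphism C -> C})). Qed.

Lemma rank_perp (C : numClosedFieldType) n (U : 'M[C]_n) :
  \rank (perp U) = (n - \rank U)%N.
Proof. by rewrite /perp mxrank_ker rank_hadj. Qed.

Lemma perp_orth (C : numClosedFieldType) m n (U : 'M[C]_n) (x : 'M[C]_(m, n)) :
  (x <= U)%MS -> perp U *m hadj x = 0.
Proof.
by case/submxP => D ->; rewrite hadjM mulmxA /perp mulmx_ker mul0mx.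
Qed.

Lemma cap0 (C : numClosedFieldType) n (W V : 'M[C]_n) m (x : 'M[C]_(m, n)) :
  direct_compl W V -> (x <= V)%MS -> x *m hadj W = 0 -> x = 0.
Proof.
case=> _ full xV xW.
have hW : W *m hadj x = 0 by rewrite -[W]hadjK -hadjM xW hadj0.
have hP := @perp_orth _ _ _ _ _ xV.
have : (1%:M <= col_mx W (perp V))%MS by rewrite -addsmxE sub1mx.
case/submxP => D HD.
apply: hadj_eq0.
by rewrite -[hadj x]mul1mx HD -mulmxA mul_col_mx hW hP col_mx0 mulmx0.
Qed.

Lemma direct_sym (C : numClosedFieldType) n (W V : 'M[C]_n) :
  direct_compl W V -> direct_compl V W.
Proof.
move=> d; have [dx full] := d.
have capWV := elimT mxdirect_addsP dx.
have e1 := mxrank_sum_cap W (perp V).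
rewrite capWV mxrank0 rank_perp in e1.
move: full; rewrite /row_full => /eqP full.
rewrite full in e1.
have hV := rank_leq_col V; have hW := rank_leq_col W.
have capVW : (V :&: perp W)%MS = 0.
  apply: (@cap0 _ _ _ _ _ _ d); first exact: capmxSl.
  by apply/eqP; rewrite -sub_kermx; exact: capmxSr.
split; first by apply/mxdirect_addsP.
have e2 := mxrank_sum_cap V (perp W).
rewrite capVW mxrank0 rank_perp in e2.
rewrite /row_full; apply/eqP; lia.
Qed.


Lemma expand (C : numClosedFieldType) (a b : C) :
  (a - b^*) * (a - b^*)^* = a * a^* + b^* * b - (a * b + (a * b)^*).
Proof. rewrite rmorphB rmorphM /= conjCK. ring. Qed.

Lemma frob (C : numClosedFieldType) N (G : 'M[C]_N) (d : nat) :
  G *m G = G -> \tr G = d%:R ->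
  d%:R <= \sum_(i < N) \sum_(j < N) `|G j i| ^+ 2 /\
  (\sum_(i < N) \sum_(j < N) `|G j i| ^+ 2 = d%:R <-> hadj G = G).
Proof.
move=> GG trG.
set F := \sum_(i < N) \sum_(j < N) `|G j i| ^+ 2.
set X := \sum_(i < N) \sum_(j < N)
           ((G j i - (G i j)^*) * (G j i - (G i j)^*)^*).
have Xge0 : forall i j : 'I_N, 0 <= (G j i - (G i j)^*) * (G j i - (G i j)^*)^*.
  by move=> i j; exact: mul_conjC_ge0.
have trGG : \sum_(i < N) \sum_(j < N) (G j i * G i j) = d%:R.
  rewrite -trG -[in RHS]GG /mxtrace; apply: eq_bigr => i _; rewrite mxE.
  by apply: eq_bigr => j _; rewrite mulrC.
have F2 : \sum_(i < N) \sum_(j < N) ((G i j)^* * G i j) = F.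
  rewrite /F exchange_big /=; apply: eq_bigr => i _; apply: eq_bigr => j _.
  by rewrite normCK mulrC.
have eX : X = (F - d%:R) *+ 2.
  transitivity (\sum_(i < N) \sum_(j < N) (`|G j i| ^+ 2 + (G i j)^* * G i j
       - (G j i * G i j + (G j i * G i j)^*))).
    apply: eq_bigr => i _; apply: eq_bigr => j _.
    by rewrite normCK expand.
  under eq_bigr => i _ do rewrite sumrB !big_split /=.
  rewrite sumrB !big_split /= F2 trGG.
  have cj : \sum_(i < N) \sum_(j < N) (G j i * G i j)^* = d%:R.
    rewrite -(conjC_nat _ d) -trGG rmorph_sum; apply: eq_bigr => i _.
    by rewrite rmorph_sum.
  rewrite cj.
  rewrite -/F mulr2n; ring.
have X0 : 0 <= X by apply: sumr_ge0 => i _; apply: sumr_ge0 => j _; exact: Xge0.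
split.
  by rewrite -subr_ge0 -(pmulrn_lge0 _ (isT : (0 < 2)%N)) -eX.
split.
  move=> Fd.
  have X0' : X = 0 by rewrite eX Fd subrr mul0rn.
  apply/matrixP => j i; rewrite hadjE.
  have h1 := @psumr_eq0P _ _ _ _ (fun i _ => sumr_ge0 _ (fun j _ => Xge0 i j)) X0' i isT.
  have /eqP := @psumr_eq0P _ _ _ _ (fun j _ => Xge0 i j) h1 j isT.
  by rewrite mul_conjC_eq0 subr_eq0 => /eqP ->.
move=> hG.
have X0' : X = 0.
  apply: big1 => i _; apply: big1 => j _.
  have -> : (G i j)^* = G j i by rewrite -hadjE hG.
  by rewrite subrr mul0r.
move: X0'; rewrite eX => /eqP; rewrite mulrn_eq0 /= subr_eq0 => /eqP.
by [].
Qed.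


Lemma colT (C : numClosedFieldType) n N (w : 'I_N -> 'cV[C]_n) p (M : 'M[C]_(p, n)) k j :
  (M *m (fam_mx w)^T) k j = (M *m w j) k 0.
Proof. by rewrite !mxE; apply: eq_bigr => l _; rewrite !mxE. Qed.

Lemma famT_entry (C : numClosedFieldType) n N (w : 'I_N -> 'cV[C]_n) k j :
  (fam_mx w)^T k j = w j k 0.
Proof. by rewrite !mxE. Qed.

Lemma cdotE (C : numClosedFieldType) n N (w v : 'I_N -> 'cV[C]_n) i j :
  cdot (w i) (v j) = (hadj (fam_mx v)^T *m (fam_mx w)^T) j i.
Proof. by rewrite /cdot !mxE; apply: eq_bigr => l _; rewrite !mxE. Qed.

Lemma mx_ext_col (C : numClosedFieldType) m n (A B : 'M[C]_(m, n)) :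
  (forall f : 'cV[C]_n, A *m f = B *m f) -> A = B.
Proof.
move=> H; apply/matrixP => i j.
have := congr1 (fun M : 'cV[C]_m => M i 0) (H (delta_mx j 0)).
by rewrite -!colE !mxE.
Qed.

Lemma dualP (C : numClosedFieldType) n N (W V : 'M[C]_n) (w v : 'I_N -> 'cV[C]_n) :
  oblique_dual W V w v -> oproj W V = (fam_mx w)^T *m hadj (fam_mx v)^T.
Proof.
case=> _ H; apply: mx_ext_col => f; rewrite H -mulmxA.
apply/matrixP => k z; rewrite (ord1 z) summxE [RHS]mxE.
apply: eq_bigr => i _; rewrite !mxE mulrC; congr (_ * _).
by rewrite /cdot !mxE; apply: eq_bigr => l _; rewrite !mxE.
Qed.

Lemma frame_opE (C : numClosedFieldType) n N (w : 'I_N -> 'cV[C]_n) :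
  frame_op w = (fam_mx w)^T *m hadj (fam_mx w)^T.
Proof.
apply/matrixP => k l; rewrite summxE [RHS]mxE; apply: eq_bigr => i _.
by rewrite !mxE big_ord1 !mxE.
Qed.

Lemma orth (C : numClosedFieldType) n m p (U : 'M[C]_n) (A : 'M[C]_(m, n)) (Y : 'M[C]_(n, p)) :
  (A <= U)%MS -> (Y^T <= perp U)%MS -> hadj (A^T) *m Y = 0.
Proof.
case/submxP => D -> hY; move: hY; rewrite /perp sub_kermx => /eqP hY.
rewrite trmx_mul hadjM -mulmxA.
have -> : hadj (U^T) *m Y = (Y^T *m hadj U)^T.
  by apply/matrixP => i j; rewrite !mxE; apply: eq_bigr => k _; rewrite !mxE mulrC.
by rewrite hY trmx0 mulmx0.
Qed.

Lemma oproj_kill (C : numClosedFieldType) n p (A B : 'M[C]_n) (Y : 'M[C]_(n, p)) :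
  direct_compl A B -> (Y^T <= perp B)%MS -> oproj A B *m Y = 0.
Proof.
case=> dx _ hY; have cap := elimT mxdirect_addsP dx.
by rewrite /oproj -[Y]trmxK -trmx_mul proj_mx_0 // trmx0.
Qed.

Lemma oproj_fix (C : numClosedFieldType) n p (A B : 'M[C]_n) (Y : 'M[C]_(n, p)) :
  direct_compl A B -> (Y^T <= A)%MS -> oproj A B *m Y = Y.
Proof.
case=> dx _ hY; have cap := elimT mxdirect_addsP dx.
by rewrite /oproj -[Y]trmxK -trmx_mul proj_mx_id.
Qed.

Lemma oproj_compl (C : numClosedFieldType) n (A B : 'M[C]_n) :
  direct_compl A B -> ((1%:M - oproj A B)^T <= perp B)%MS.
Proof.
case=> dx full.
have -> : (1%:M - oproj A B)^T = 1%:M - 1%:M *m proj_mx A (perp B).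
  by rewrite mul1mx /oproj; apply/matrixP => i j; rewrite !mxE eq_sym.
by apply: proj_mx_compl_sub; rewrite sub1mx.
Qed.

Lemma hadj_trC (C : numClosedFieldType) m p (X : 'M[C]_(m, p)) : hadj (X^T) = (hadj X)^T.
Proof. by apply/matrixP => i j; rewrite !mxE. Qed.

Unset Implicit Arguments.

Theorem proposition3p3 (C : numClosedFieldType) (n N : nat)
  (W V : 'M[C]_n) (w v : 'I_N -> 'cV[C]_n) (Sdag : 'M[C]_n) :
  direct_compl W V ->
  frame_for w W ->
  oblique_dual W V w v ->
  is_MP_inverse (frame_op w) Sdag ->
  (\rank W)%:R <= \sum_(i < N) \sum_(j < N) `|cdot (w i) (v j)| ^+ 2 /\
  (\sum_(i < N) \sum_(j < N) `|cdot (w i) (v j)| ^+ 2 = (\rank W)%:R <->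
   forall j : 'I_N, v j = oproj V W *m Sdag *m w j).
Proof.
move=> dWV fw dual MP.
have dVW := direct_sym dWV.
have [fv _] := dual.
have wW : (fam_mx w <= W)%MS by move: fw; rewrite /frame_for => /andP[].
have vV : (fam_mx v <= V)%MS by move: fv; rewrite /frame_for => /andP[].
have hP := dualP dual.
have capWV : (W :&: perp V)%MS = 0 by case: dWV => /mxdirect_addsP.
set T := (fam_mx w)^T in hP *.
set B := (fam_mx v)^T in hP *.
have PT : oproj W V *m T = T by apply: oproj_fix => //; rewrite trmxK.
set G := hadj B *m T.
have GG : G *m G = G by rewrite /G -!mulmxA (mulmxA T) -hP PT.
have trG : \tr G = (\rank W)%:R.
  rewrite /G mxtrace_mulC -hP /oproj mxtrace_tr trace_idem; last exact: proj_mx_proj.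
  have s1 : (proj_mx W (perp V) <= W)%MS.
    by have := @proj_mx_sub _ _ _ W (perp V) 1%:M; rewrite mul1mx.
  have s2 : (W <= proj_mx W (perp V))%MS.
    by rewrite -{1}(proj_mx_id capWV (submx_refl W)) submxMl.
  by congr (_%:R); apply/eqP; rewrite eqn_leq !mxrankS.
have sumE : \sum_(i < N) \sum_(j < N) `|cdot (w i) (v j)| ^+ 2
          = \sum_(i < N) \sum_(j < N) `|G j i| ^+ 2.
  by apply: eq_bigr => i _; apply: eq_bigr => j _; rewrite cdotE.
rewrite sumE; have [ineq eqv] := frob GG trG; split => //.
rewrite eqv.
have SE := frame_opE w; rewrite -/T in SE.
have hS : hadj (frame_op w) = frame_op w by rewrite SE hadjM hadjK.
have hSd : hadj Sdag = Sdag := @MP_herm _ _ _ _ hS MP.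
have [m1 m2 m3 m4] := MP.
have SST : frame_op w *m Sdag *m T = T.
  set E := frame_op w *m Sdag.
  have ES : (1%:M - E) *m frame_op w = 0 by rewrite mulmxBl mul1mx /E m1 subrr.
  have M0 : (1%:M - E) *m T = 0.
    apply: mul_hadj_eq0.
    by rewrite hadjM !mulmxA -(mulmxA _ T) -SE ES mul0mx.
  by move/eqP: M0; rewrite mulmxBl mul1mx subr_eq0 => /eqP.
have TSS : hadj T *m Sdag *m frame_op w = hadj T.
  by have := congr1 (@hadj C _ _) SST; rewrite !hadjM hSd hS mulmxA.
split.
- move=> hG j.
  have Bfix : oproj V W *m B = B by apply: oproj_fix => //; rewrite trmxK.
  have s1 : hadj B *m oproj W V = hadj B.
    have h0 : hadj B *m (1%:M - oproj W V) = 0 := orth vV (oproj_compl dWV).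
    by move/eqP: h0; rewrite mulmxBr mulmx1 subr_eq0 => /eqP.
  have GE : G = hadj T *m B by rewrite -hG /G hadjM hadjK.
  have s2 : hadj B = hadj T *m B *m hadj B.
    by rewrite -GE /G -mulmxA -hP s1.
  have s3 : hadj T *m Sdag *m oproj W V = hadj B.
    transitivity (hadj T *m Sdag *m (T *m hadj T) *m (B *m hadj B)).
      by rewrite hP {1}s2 !mulmxA.
    by rewrite -SE TSS mulmxA -s2.
  have s4 : B = hadj (oproj W V) *m Sdag *m T.
    by rewrite -[B]hadjK -s3 !hadjM hSd hadjK mulmxA.
  have s5 : oproj V W *m hadj (oproj W V) = oproj V W.
    have h0 : oproj V W *m (1%:M - hadj (oproj W V)) = 0.
      apply: oproj_kill dVW _.
      rewrite /perp sub_kermx.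
      have -> : (1%:M - hadj (oproj W V))^T *m hadj W
              = hadj (((1%:M - oproj W V) *m W^T)^T).
        by rewrite trmx_mul trmxK hadjM (hadj_trC (1%:M - oproj W V)) hadjB hadj1.
      by rewrite mulmxBl mul1mx oproj_fix ?trmxK // subrr trmx0 hadj0.
    by move/eqP: h0; rewrite mulmxBr mulmx1 subr_eq0 => /eqP.
  have BE : B = oproj V W *m Sdag *m T by rewrite -Bfix {1}s4 !mulmxA s5.
  apply/matrixP => k z; rewrite (ord1 z) -(famT_entry v k j) -/B BE colT //.
- move=> hv.
  have BE : B = oproj V W *m Sdag *m T.
    by apply/matrixP => k j; rewrite colT /B famT_entry hv.
  have RT : hadj (oproj V W) *m T = T.
    have h0 : hadj T *m (1%:M - oproj V W) = 0 := orth wW (oproj_compl dVW).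
    have h1 : hadj T *m oproj V W = hadj T.
      by move/eqP: h0; rewrite mulmxBr mulmx1 subr_eq0 => /eqP.
    by have := congr1 (@hadj C _ _) h1; rewrite hadjM !hadjK.
  have GE : G = hadj T *m Sdag *m T.
    by rewrite /G BE !hadjM hSd -!mulmxA RT.
  by rewrite GE !hadjM hadjK hSd mulmxA.
Qed.
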